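(* Let $N,n,m,p$ be positive integers, $B\in\mathbb{R}^{n\times p}$, $C\in\mathbb{R}^{m\times n}$, $H\in\mathbb{R}^{n\times m}$, $W=[w_{ij}]\in\mathbb{R}^{N\times N}$ with $w_{ii}=0$ for all $i$, $\Delta=\mathrm{diag}(\delta_1,\dots,\delta_N)$ with $\delta_i\in\{0,1\}$, and $h>0$. Put $\Phi_s=e^hI_{Nn}+(e^h-1)W\otimes HC$ and $\Psi_s=(e^h-1)(\Delta\otimes B)$, and assume $0$ is not an eigenvalue of $\Phi_s$. Then the discrete-time system $X(k+1)=\Phi_sX(k)+\Psi_sU(k)$ is controllable if and only if the continuous-time system $\dot X(t)=(I_{Nn}+W\otimes HC)X(t)+(\Delta\otimes B)U(t)$ is controllable.
   Context: The continuous-time system is controllable in the usual sense (equivalently its PBH rank condition holds for all $s\in\mathbb{C}$). The discrete-time system is called controllable if every initial state can be steered to the origin in finitely many steps. $\otimes$ is the Kronecker product. *)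

(* Defs.v *)
(* Kronecker product = tensmx (A *t B) from
   mathcomp-real-closed's mxtens.v (standard row-major Kronecker product). *)
From HB Require Import structures.
From mathcomp Require Import all_boot all_order all_algebra.
From mathcomp Require Export mxtens.
Set Implicit Arguments. Unset Strict Implicit. Unset Printing Implicit Defensive.
Import GRing.Theory.
Local Open Scope ring_scope.

(* Kalman controllability matrix [B, AB, ..., A^(d-1) B] : d x (d*q);
   column index j corresponds to block (mxtens_unindex j).1 and column
   (mxtens_unindex j).2 inside that block. *)
Definition ctrb_mx (R : pzRingType) (d q : nat) (A : 'M[R]_d) (B : 'M[R]_(d, q))
  : 'M[R]_(d, d * q) :=
  \matrix_(i < d, j < d * q)
     ((A ^+ (mxtens_unindex j).1 *m B) i (mxtens_unindex j).2).

Definition ct_controllable (F : fieldType) (d q : nat)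
  (A : 'M[F]_d) (B : 'M[F]_(d, q)) : Prop :=
  \rank (ctrb_mx A B) = d.

Fixpoint dt_traj (R : pzRingType) (d q : nat) (Phi : 'M[R]_d) (Psi : 'M[R]_(d, q))
  (x0 : 'cV[R]_d) (u : nat -> 'cV[R]_q) (k : nat) : 'cV[R]_d :=
  match k with
  | 0 => x0
  | k'.+1 => Phi *m dt_traj Phi Psi x0 u k' + Psi *m u k'
  end.

Definition dt_controllable (R : pzRingType) (d q : nat)
  (Phi : 'M[R]_d) (Psi : 'M[R]_(d, q)) : Prop :=
  forall x0 : 'cV[R]_d, exists (k : nat) (u : nat -> 'cV[R]_q),
    dt_traj Phi Psi x0 u k = 0.

(* Main.v *)
Require Import Defs.
From HB Require Import structures.
From mathcomp Require Import all_boot all_order all_algebra.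
From mathcomp Require Import all_classical all_reals all_analysis.
From mathcomp Require Import mxtens zify.
From mathcomp Require Import ring.
Set Implicit Arguments. Unset Strict Implicit. Unset Printing Implicit Defensive.
Import GRing.Theory Num.Theory.
Local Open Scope ring_scope.
Section Gen.
Variables (F : fieldType) (d q : nat).
Local Notation D := d.+1.
Implicit Types (X : 'M[F]_D) (Y : 'M[F]_(D,q)).

Definition span X Y (v : 'cV[F]_D) :=
  exists u : nat -> 'cV[F]_q, v = \sum_(k < D) X ^+ k *m Y *m u k.

Lemma span0 X Y : span X Y 0.
Proof. by exists (fun _ => 0); rewrite big1 // => k _; rewrite mulmx0. Qed.

Lemma spanD X Y v w : span X Y v -> span X Y w -> span X Y (v + w).
Proof.
move=> [u ->] [u' ->]; exists (fun k => u k + u' k); rewrite -big_split /=.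
by apply: eq_bigr => k _; rewrite mulmxDr.
Qed.

Lemma spanZ X Y c v : span X Y v -> span X Y (c *: v).
Proof.
move=> [u ->]; exists (fun k => c *: u k); rewrite scaler_sumr.
by apply: eq_bigr => k _; rewrite scalemxAr.
Qed.

Lemma spanB X Y v w : span X Y v -> span X Y w -> span X Y (v - w).
Proof. by move=> hv hw; apply: spanD => //; rewrite -scaleN1r; apply: spanZ. Qed.

Lemma span_sum X Y (I : Type) (r : seq I) (P : pred I) (f : I -> 'cV_D) :
  (forall i, P i -> span X Y (f i)) -> span X Y (\sum_(i <- r | P i) f i).
Proof. by move=> H; apply: (big_ind (span X Y)) => //; [exact: span0 | exact: spanD]. Qed.

Lemma horner_mxE X (p : {poly F}) :
  horner_mx X p = \sum_(i < size p) p`_i *: X ^+ i.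
Proof.
rewrite -{1}[p]coefK poly_def raddf_sum /=; apply: eq_bigr => i _.
by rewrite linearZ /= rmorphXn /= horner_mx_X.
Qed.

Lemma CH X : X ^+ D = - \sum_(i < D) (char_poly X)`_i *: X ^+ i.
Proof.
have := Cayley_Hamilton X; rewrite horner_mxE size_char_poly big_ord_recr /=.
have /monicP := char_poly_monic X; rewrite lead_coefE size_char_poly /= => ->.
by rewrite scale1r => /eqP; rewrite addrC addr_eq0 => /eqP ->.
Qed.

Lemma mxpowS X k : X ^+ k.+1 = X *m X ^+ k. Proof. by rewrite exprS. Qed.
Lemma mxpowSr X k : X ^+ k.+1 = X ^+ k *m X. Proof. by rewrite exprSr. Qed.
Lemma mxpowD X i j : X ^+ (i + j) = X ^+ i *m X ^+ j. Proof. by rewrite exprD. Qed.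

Lemma span_pow X Y k u : span X Y (X ^+ k *m Y *m u).
Proof.
elim/ltn_ind: k u => k IH u.
case: (ltnP k D) => hk.
  exists (fun j => if j == k then u else 0).
  rewrite (bigD1 (Ordinal hk)) //= eqxx big1 ?addr0 // => j hj.
  case: eqP => [hjk|_]; last by rewrite mulmx0.
  by case/eqP: hj; apply: val_inj.
have -> : X ^+ k *m Y *m u =
  \sum_(i < D) X ^+ (k - D + i) *m Y *m (- (char_poly X)`_i *: u).
  rewrite -{1}(subnK hk) mxpowD CH mulmxN mulmx_sumr !mulNmx !mulmx_suml -sumrN.
  apply: eq_bigr => i _.
  rewrite mxpowD. rewrite -[X ^+ (k - D) *m (_ *: _)]scalemxAr -!scalemxAl.
  by rewrite -[_ *m (_ *: u)]scalemxAr scaleNr.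
apply: span_sum => i _; apply: IH; have := ltn_ord i; lia.
Qed.

Lemma span_mulX X Y v : span X Y v -> span X Y (X *m v).
Proof.
move=> [u ->]; rewrite mulmx_sumr; apply: span_sum => k _.
have -> : X *m (X ^+ k *m Y *m u k) = X ^+ k.+1 *m Y *m u k.
  by rewrite !mulmxA mxpowS.
exact: span_pow.
Qed.

Lemma span_powX X Y v i : span X Y v -> span X Y (X ^+ i *m v).
Proof.
move=> hv; elim: i => [|i IH]; first by rewrite expr0 mul1mx.
by rewrite mxpowS -mulmxA; apply: span_mulX.
Qed.

Lemma span_min X Y (S : 'cV_D -> Prop) : S 0 ->
  (forall v w, S v -> S w -> S (v + w)) -> (forall v, S v -> S (X *m v)) ->
  (forall u, S (Y *m u)) -> forall v, span X Y v -> S v.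
Proof.
move=> S0 SD SX SY v [u ->]; apply: (big_ind S) => // k _.
have H j : S (X ^+ j *m (Y *m u k)).
  elim: j => [|j IHj]; first by rewrite expr0 mul1mx.
  by rewrite mxpowS -mulmxA; apply: SX.
by rewrite -mulmxA.
Qed.

Section AB.
Variables (A : 'M[F]_D) (B : 'M[F]_(D, q)) (a : F).
Hypothesis ha : a != 0.

Lemma spanAB_Phi v : span A B v -> span (1%:M + a *: A) (a *: B) v.
Proof.
apply: span_min; [exact: span0 | exact: spanD | |].
  move=> w hw.
  have -> : A *m w = a^-1 *: ((1%:M + a *: A) *m w - w).
    by rewrite mulmxDl mul1mx -scalemxAl addrC addKr scalerA mulVf // scale1r.
  by apply: spanZ; apply: spanB => //; apply: span_mulX.
move=> u; have -> : B *m u = (1%:M + a *: A) ^+ 0 *m (a *: B) *m (a^-1 *: u).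
  by rewrite expr0 mul1mx -scalemxAl -scalemxAr scalerA mulfV // scale1r.
exact: span_pow.
Qed.

Lemma spanPhi_AB v : span (1%:M + a *: A) (a *: B) v -> span A B v.
Proof.
apply: span_min; [exact: span0 | exact: spanD | |].
  move=> w hw; rewrite mulmxDl mul1mx -scalemxAl.
  by apply: spanD => //; apply: spanZ; apply: span_mulX.
move=> u; have -> : (a *: B) *m u = A ^+ 0 *m B *m (a *: u).
  by rewrite expr0 mul1mx -scalemxAl -scalemxAr.
exact: span_pow.
Qed.
End AB.

Lemma traj_eq X Y x0 u k : dt_traj X Y x0 u k =
  X ^+ k *m x0 + \sum_(j < k) X ^+ j *m Y *m u (k - j.+1)%N.
Proof.
elim: k => [|k IH] /=; first by rewrite expr0 mul1mx big_ord0 addr0.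
rewrite IH big_ord_recl /= expr0 mul1mx subSS subn0 mulmxDr mulmxA.
rewrite -mxpowS mulmx_sumr -addrA; congr (_ + _).
rewrite addrC; congr (_ + _); apply: eq_bigr => j _.
by rewrite !mulmxA -mxpowS.
Qed.

Lemma span_inv X Y v k : X \in unitmx -> span X Y (X ^+ k *m v) -> span X Y v.
Proof.
move=> hu; set c := char_poly X.
have c0 : c`_0 != 0.
  by rewrite char_poly_det mulf_eq0 negb_or signr_eq0 /= -unitfE -unitmxE.
set Z := - (c`_0)^-1 *: \sum_(i < D) c`_i.+1 *: X ^+ i.
have hZX : Z *m X = 1%:M.
  have := Cayley_Hamilton X; rewrite horner_mxE size_char_poly big_ord_recl /=.
  rewrite expr0 => /eqP; rewrite addr_eq0 => /eqP h0.
  rewrite /Z -scalemxAl mulmx_suml.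
  have -> : \sum_(i < D) (c`_i.+1 *: X ^+ i) *m X =
            \sum_(i < D) c`_(bump 0 i) *: X ^+ (bump 0 i).
    by apply: eq_bigr => i _; rewrite -scalemxAl -mxpowSr.
  have h1 : \sum_(i < D) c`_(bump 0 i) *: X ^+ (bump 0 i) = - (c`_0)%:A.
    by rewrite /c h0 opprK.
  by rewrite h1 scalerN scaleNr opprK scalerA mulVf // scale1r.
have SZ w : span X Y w -> span X Y (Z *m w).
  move=> hw; rewrite /Z -scalemxAl mulmx_suml; apply: spanZ.
  by apply: span_sum => i _; rewrite -scalemxAl; apply: spanZ; apply: span_powX.
elim: k v => [|k IH] v; first by rewrite expr0 mul1mx.
move=> h; have : span X Y (X *m v) by apply: IH; rewrite mulmxA -mxpowSr.
by move/SZ; rewrite mulmxA hZX mul1mx.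
Qed.

Lemma ctrb_mulE X Y (w : 'cV_(D * q)) : ctrb_mx X Y *m w =
  \sum_(k < D) X ^+ k *m Y *m \col_(l < q) w (mxtens_index (k, l)) 0.
Proof.
apply/matrixP => i j; rewrite (ord1 j) !mxE summxE.
rewrite (reindex (@mxtens_index D q)) /=; last first.
  by exists (@mxtens_unindex D q) => x _; [apply: mxtens_indexK | apply: mxtens_unindexK].
under [RHS]eq_bigr do rewrite mxE.
rewrite pair_big /=; apply: eq_bigr => -[k l] _.
by rewrite !mxE mxtens_indexK.
Qed.

Lemma ct_span X Y : ct_controllable X Y <-> forall v, span X Y v.
Proof.
have key v : span X Y v <-> exists w, v = ctrb_mx X Y *m w.
  split.
    case=> u ->; exists (\col_j (u (mxtens_unindex j).1) (mxtens_unindex j).2 0).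
    rewrite ctrb_mulE; apply: eq_bigr => k _; congr (_ *m _).
    by apply/matrixP => l j; rewrite !mxE mxtens_indexK /= (ord1 j).
  case=> w ->; rewrite ctrb_mulE.
  exists (fun k => \col_l w (mxtens_index (inord k, l)) 0).
  by apply: eq_bigr => k _; rewrite inord_val.
rewrite /ct_controllable; split.
  move=> hr v; apply/key.
  have : (v^T <= (ctrb_mx X Y)^T)%MS.
    apply: submx_trans (submx1 _) _.
    by rewrite sub1mx /row_full mxrank_tr hr.
  by case/submxP => Dm hD; exists Dm^T; rewrite -[v]trmxK hD trmx_mul trmxK.
move=> hs; apply/eqP; rewrite -mxrank_tr -[_ == _]/(row_full _) -sub1mx.
apply/row_subP => i; have [w hw] := (key _).1 (hs (row i 1%:M)^T).
by rewrite -[row i _]trmxK hw trmx_mul; exact: submxMl.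
Qed.
End Gen.

Lemma gen_equiv (F : fieldType) d q (A : 'M[F]_d) (B : 'M[F]_(d, q)) (a : F) :
  a != 0 -> (1%:M + a *: A) \in unitmx ->
  (dt_controllable (1%:M + a *: A) (a *: B) <-> ct_controllable A B).
Proof.
case: d A B => [|d] A B ha hu.
  split=> _.
    by apply/eqP; rewrite -leqn0 rank_leq_row.
  by move=> x0; exists 0%N, (fun _ => 0); rewrite /= [x0]flatmx0.
rewrite ct_span; split.
  move=> hdt v; apply: spanPhi_AB.
  have [k [u hk]] := hdt v; rewrite traj_eq in hk.
  apply: (@span_inv _ _ _ _ _ _ k hu).
  move/eqP: hk; rewrite addr_eq0 => /eqP ->.
  rewrite -scaleN1r; apply: spanZ; apply: span_sum => j _; exact: span_pow.
move=> hs x0.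
have [w hw] := spanAB_Phi ha (hs (- ((1%:M + a *: A) ^+ d.+1 *m x0))).
exists d.+1, (fun i => w (d.+1 - i.+1)%N); rewrite traj_eq.
rewrite (eq_bigr (fun j : 'I_d.+1 => (1%:M + a *: A) ^+ j *m (a *: B) *m w j)).
  by rewrite -hw subrr.
move=> j _; congr (_ *m w _); have := ltn_ord j; lia.
Qed.

Unset Implicit Arguments.

Theorem corollary12 (R : realType) (N n m p : nat)
  (hN : (0 < N)%N) (hn : (0 < n)%N) (hm : (0 < m)%N) (hp : (0 < p)%N)
  (B : 'M[R]_(n, p)) (C : 'M[R]_(m, n)) (H : 'M[R]_(n, m))
  (W : 'M[R]_N) (hW : forall i : 'I_N, W i i = 0)
  (delta : 'I_N -> bool) (h : R) (hh : 0 < h) :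
  let Delta : 'M[R]_N := diag_mx (\row_i (delta i)%:R) in
  let Phi_s : 'M[R]_(N * n) :=
    expR h *: 1%:M + (expR h - 1) *: tensmx W (H *m C) in
  let Psi_s : 'M[R]_(N * n, N * p) := (expR h - 1) *: tensmx Delta B in
  ~~ eigenvalue Phi_s 0 ->
  (dt_controllable Phi_s Psi_s <->
   ct_controllable (1%:M + tensmx W (H *m C)) (tensmx Delta B)).
Proof.
move=> Delta Phi_s Psi_s hev.
have ha : expR h - 1 != 0.
  by apply: lt0r_neq0; rewrite subr_gt0 expR_gt1.
have hPhi : Phi_s = 1%:M + (expR h - 1) *: (1%:M + tensmx W (H *m C)).
  rewrite /Phi_s scalerDr addrA; congr (_ + _).
  by rewrite -{2}[1%:M]scale1r -scalerDl addrC subrK.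
have hu : Phi_s \in unitmx.
  rewrite -row_free_unit -kermx_eq0; move/negbNE: hev.
  by rewrite /eigenspace (_ : 0%:M = 0) ?subr0 // -scalemx1 scale0r.
rewrite hPhi in hu *; exact: gen_equiv.
Qed.
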